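(* Let $G\cong\mathbb{R}^{d_1}\times\mathbb{R}^{d_2}$ be a 2-step stratified group with sub-Laplacian $\mathcal{L}$, with $\Omega$, $\phi$, $\phi_*$, $\mathfrak{l}_{\mathbf{y}}$, $\bar{\mathfrak{l}}_{\mathbf{y}}$ and $\Xi$ as defined below. For all $t\in\mathbb{R}$ and $(\mathbf{x},\mathbf{y},\boldsymbol{\xi})$ with $\mathbf{x}\in G$ and $(\mathbf{y},\boldsymbol{\xi})\in\Xi$, \[ \phi_*(t,\mathbf{x},\mathbf{y},\boldsymbol{\xi})=\phi(t,\mathfrak{l}_{\mathbf{y}}^{-1}\mathbf{x},\bar{\mathfrak{l}}_{\mathbf{y}}^{-1}\boldsymbol{\xi}). \]
   Context: $G$ is a 2-step stratified Lie group identified via exponential coordinates with $\mathbb{R}^{d_1}_x\times\mathbb{R}^{d_2}_u$, group law $(y,v)\cdot(x,u)=(y+x,v+u+[y,x]/2)$, coordinates on $\mathfrak{g}_1$ orthonormal for the inner product $\langle\cdot,\cdot\rangle$ making the vector fields $X_j$ of $\mathcal{L}=-\sum X_j^2$ orthonormal; $\mathbf{x}=(x,u)$, $\boldsymbol{\xi}=(\xi,\mu)$. $J_\mu$ is the skew-symmetric matrix with $\langle J_\mu x,x'\rangle=\mu\cdot[x,x']$, $|J_\mu|=(-J_\mu^2)^{1/2}$, and $\Omega$ is the set of $\mu$ where $\operatorname{rk}J_\mu$ is maximal. $\mathcal{H}(\mathbf{x},\boldsymbol{\xi})=|\xi+J_\mu x/2|$; for $(\mathbf{y},\boldsymbol{\xi})$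 with $\xi+J_\mu y/2\neq0$, $t\mapsto(\mathbf{x}_*^t(\mathbf{y},\boldsymbol{\xi}),\boldsymbol{\xi}_*^t(\mathbf{y},\boldsymbol{\xi}))$ is the solution of $\dot{\mathbf{x}}=\nabla_{\boldsymbol{\xi}}\mathcal{H}$, $\dot{\boldsymbol{\xi}}=-\nabla_{\mathbf{x}}\mathcal{H}$ with initial datum $(\mathbf{y},\boldsymbol{\xi})$, and $\mathbf{x}^t(\boldsymbol{\xi})=\mathbf{x}_*^t(0,\boldsymbol{\xi})$, $\boldsymbol{\xi}^t(\boldsymbol{\xi})=\boldsymbol{\xi}_*^t(0,\boldsymbol{\xi})$. Define $\phi(t,\mathbf{x},\boldsymbol{\xi})=(\mathbf{x}-\mathbf{x}^t(\boldsymbol{\xi}))\cdot\boldsymbol{\xi}^t(\boldsymbol{\xi})+\frac{i}{4}\langle|J_\mu|(x-x^t(\boldsymbol{\xi})),x-x^t(\boldsymbol{\xi})\rangle$ and $\phi_*(t,\mathbf{x},\mathbf{y},\boldsymbol{\xi})=(\mathbf{x}-\mathbf{x}_*^t(\mathbf{y},\boldsymbol{\xi}))\cdot\boldsymbol{\xi}_*^t(\mathbf{y},\boldsymbol{\xi})+\frac{i}{4}\langle|J_\mu|(x-x_*^t(\mathbf{y},\boldsymbol{\xi})),x-x_*^t(\mathbf{y},\boldsymbol{\xi})\rangle$ (where $x^t$, $x_*^t$ are first-layer components). $\mathfrak{l}_{\mathbf{y}}(\mathbf{x})=\mathbf{y}\cdot\mathbf{x}$ is left translation, and $\bar{\mathfrak{l}}_{\mathbf{y}}(\xi,\mu)=(\xi-J_\mu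 y/2,\mu)$ for $\mathbf{y}=(y,v)$. $\Xi_{\mathbf{y}}=\bar{\mathfrak{l}}_{\mathbf{y}}((\mathbb{R}^{d_1}\setminus\{0\})\times\Omega)$ and $\Xi=\bigcup_{\mathbf{y}\in G}\{\mathbf{y}\}\times\Xi_{\mathbf{y}}$. *)

(* Defs.v *)
From HB Require Import structures.
From mathcomp Require Import all_boot all_order all_algebra.
From mathcomp Require Import all_classical all_reals all_analysis.
From mathcomp Require Import complex.

Set Implicit Arguments.
Unset Strict Implicit.
Unset Printing Implicit Defensive.

Import Order.TTheory GRing.Theory Num.Theory.
Import numFieldNormedType.Exports.
Local Open Scope ring_scope.
Local Open Scope complex_scope.

Section Defs.
Variables (R : realType) (d1 d2 : nat).
(* The bracket [.,.] : g1 x g1 -> g2 in orthonormal coordinates: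
   [x,x']_k = x *m B k *m x'^T, with each B k skew-symmetric. *)
Variable B : 'I_d2 -> 'M[R]_d1.

Definition dotv n (a b : 'rV[R]_n) : R := \sum_i a 0 i * b 0 i.
Definition enorm n (a : 'rV[R]_n) : R := Num.sqrt (dotv a a).

Definition bracket (x x' : 'rV[R]_d1) : 'rV[R]_d2 :=
  \row_k (x *m B k *m x'^T) 0 0.

(* 2-step stratified: B k skew, d2 > 0, and [g1,g1] spans g2
   (equivalently: no nonzero mu annihilates all brackets). *)
Definition stratified2 : Prop :=
  (0 < d2)%N /\ (forall k, (B k)^T = - B k) /\
  (forall mu : 'rV[R]_d2, (forall x x', dotv mu (bracket x x') = 0) -> mu = 0).

Definition gmul (y : 'rV[R]_d1 * 'rV[R]_d2) (x : 'rV[R]_d1 * 'rV[R]_d2) :=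
  (y.1 + x.1, y.2 + x.2 + 2^-1 *: bracket y.1 x.1).
Definition ginv (y : 'rV[R]_d1 * 'rV[R]_d2) := (- y.1, - y.2).
Definition ltrans y x := gmul y x.
Definition ltrans_inv y x := gmul (ginv y) x.

(* J_mu : matrix acting on column vectors with <J_mu x, x'> = mu.[x,x'] *)
Definition Jmat (mu : 'rV[R]_d2) : 'M[R]_d1 := \sum_k (mu 0 k) *: (B k)^T.
Definition Japp (mu : 'rV[R]_d2) (x : 'rV[R]_d1) : 'rV[R]_d1 :=
  (Jmat mu *m x^T)^T.


Definition is_psd_sqrt (M S : 'M[R]_d1) : Prop :=
  S^T = S /\ (forall w : 'rV[R]_d1, 0 <= (w *m S *m w^T) 0 0) /\ S *m S = M.
Definition absJ (mu : 'rV[R]_d2) : 'M[R]_d1 :=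
  match pselect (exists S, is_psd_sqrt (- (Jmat mu *m Jmat mu)) S) with
  | left h => projT1 (cid h)
  | right _ => 0
  end.

Definition Omega : set 'rV[R]_d2 :=
  [set mu | forall mu', (\rank (Jmat mu') <= \rank (Jmat mu))%N].

Definition lbar (y : 'rV[R]_d1) (p : 'rV[R]_d1 * 'rV[R]_d2) :=
  (p.1 - 2^-1 *: Japp p.2 y, p.2).
Definition lbar_inv (y : 'rV[R]_d1) (p : 'rV[R]_d1 * 'rV[R]_d2) :=
  (p.1 + 2^-1 *: Japp p.2 y, p.2).

Definition inXi (y : 'rV[R]_d1 * 'rV[R]_d2) (p : 'rV[R]_d1 * 'rV[R]_d2) : Prop :=
  exists eta nu, eta != 0 /\ Omega nu /\ p = lbar y.1 (eta, nu).

Definition Ham (x : 'rV[R]_d1) (u : 'rV[R]_d2) (xi : 'rV[R]_d1) (mu : 'rV[R]_d2) : R :=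
  enorm (xi + 2^-1 *: Japp mu x).

Definition has_partial n (g : 'rV[R]_n -> R) (p : 'rV[R]_n) (i : 'I_n) (a : R) : Prop :=
  is_derive (0 : R) (1 : R) (fun s : R => g (p + s *: delta_mx 0 i)) a.

Definition ham_sol (y : 'rV[R]_d1 * 'rV[R]_d2) (p : 'rV[R]_d1 * 'rV[R]_d2)
  (X : R -> 'rV[R]_d1) (U : R -> 'rV[R]_d2) (Xi : R -> 'rV[R]_d1) (M : R -> 'rV[R]_d2) : Prop :=
  [/\ X 0 = y.1, U 0 = y.2, Xi 0 = p.1, M 0 = p.2 &
  forall t : R,
   [/\ forall i : 'I_d1, exists a,
         has_partial (fun z => Ham (X t) (U t) z (M t)) (Xi t) i a /\
         is_derive t (1 : R) (fun s => X s 0 i) a,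
       forall k : 'I_d2, exists a,
         has_partial (fun z => Ham (X t) (U t) (Xi t) z) (M t) k a /\
         is_derive t (1 : R) (fun s => U s 0 k) a,
       forall i : 'I_d1, exists a,
         has_partial (fun z => Ham z (U t) (Xi t) (M t)) (X t) i a /\
         is_derive t (1 : R) (fun s => Xi s 0 i) (- a) &
       forall k : 'I_d2, exists a,
         has_partial (fun z => Ham (X t) z (Xi t) (M t)) (U t) k a /\
         is_derive t (1 : R) (fun s => M s 0 k) (- a)]].

(* phi_* (t, x, y, xi) built from the flow values at time t:
   (x - x_*^t).xi_*^t + i/4 <|J_mu|(x - x_*^t), x - x_*^t>, where the
   first-layer component is used in the quadratic term and mu is the
   second component of the initial covector xi. *)
Definition phase (mu : 'rV[R]_d2) (x : 'rV[R]_d1 * 'rV[R]_d2)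
  (Xt : 'rV[R]_d1) (Ut : 'rV[R]_d2) (Xit : 'rV[R]_d1) (Mt : 'rV[R]_d2) : R[i] :=
  let w := x.1 - Xt in
  (dotv w Xit + dotv (x.2 - Ut) Mt) +i*
  (4^-1 * (w *m absJ mu *m w^T) 0 0).

End Defs.

(* Main.v *)
Require Import Defs.
From HB Require Import structures.
From mathcomp Require Import all_boot all_order all_algebra.
From mathcomp Require Import all_classical all_reals all_analysis.
From mathcomp Require Import complex.
From mathcomp Require Import ring lra.
Set Implicit Arguments.
Unset Strict Implicit.
Unset Printing Implicit Defensive.
Import Order.TTheory GRing.Theory Num.Theory.
Import numFieldNormedType.Exports.
Local Open Scope ring_scope.




Section Dot.
Variable R : realType.

Lemma dotvE n (a b : 'rV[R]_n) : dotv a b = (a *m b^T) 0 0.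
Proof. by rewrite /dotv !mxE; apply: eq_bigr => i _; rewrite mxE. Qed.

Lemma dotvC n (a b : 'rV[R]_n) : dotv a b = dotv b a.
Proof. by rewrite /dotv; apply: eq_bigr => i _; rewrite mulrC. Qed.

Lemma dotvDl n (a b c : 'rV[R]_n) : dotv (a + b) c = dotv a c + dotv b c.
Proof. by rewrite /dotv -big_split; apply: eq_bigr => i _; rewrite mxE mulrDl. Qed.

Lemma dotvDr n (a b c : 'rV[R]_n) : dotv c (a + b) = dotv c a + dotv c b.
Proof. by rewrite dotvC dotvDl !(dotvC c). Qed.

Lemma dotvZl n k (a b : 'rV[R]_n) : dotv (k *: a) b = k * dotv a b.
Proof. by rewrite /dotv mulr_sumr; apply: eq_bigr => i _; rewrite mxE mulrA. Qed.

Lemma dotvZr n k (a b : 'rV[R]_n) : dotv a (k *: b) = k * dotv a b.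
Proof. by rewrite dotvC dotvZl dotvC. Qed.

Lemma dotvNl n (a b : 'rV[R]_n) : dotv (- a) b = - dotv a b.
Proof. by rewrite -scaleN1r dotvZl mulN1r. Qed.

Lemma dotvNr n (a b : 'rV[R]_n) : dotv a (- b) = - dotv a b.
Proof. by rewrite dotvC dotvNl dotvC. Qed.

Lemma dotvBl n (a b c : 'rV[R]_n) : dotv (a - b) c = dotv a c - dotv b c.
Proof. by rewrite dotvDl dotvNl. Qed.

Lemma dotvBr n (a b c : 'rV[R]_n) : dotv c (a - b) = dotv c a - dotv c b.
Proof. by rewrite dotvDr dotvNr. Qed.

Lemma dotv0l n (b : 'rV[R]_n) : dotv 0 b = 0.
Proof. by rewrite /dotv big1 // => i _; rewrite mxE mul0r. Qed.

Lemma dotv0r n (b : 'rV[R]_n) : dotv b 0 = 0.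
Proof. by rewrite dotvC dotv0l. Qed.

Lemma dotvv_ge0 n (a : 'rV[R]_n) : 0 <= dotv a a.
Proof. by rewrite /dotv sumr_ge0 // => i _; rewrite -expr2 sqr_ge0. Qed.

Lemma dotvv_eq0 n (a : 'rV[R]_n) : dotv a a = 0 -> a = 0.
Proof.
move=> h; apply/rowP => i; rewrite mxE.
have /eqP := h; rewrite /dotv psumr_eq0; last by move=> j _; rewrite -expr2 sqr_ge0.
by move/allP => /(_ i (mem_index_enum _)) /=; rewrite mulf_eq0 orbb => /eqP.
Qed.

Lemma dotv_delta n (a : 'rV[R]_n) i : dotv a (delta_mx 0 i) = a 0 i.
Proof.
rewrite /dotv (bigD1 i) //= big1 ?addr0; first by rewrite mxE !eqxx mulr1.
by move=> j /negbTE ji; rewrite mxE ji andbF mulr0.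
Qed.

End Dot.



Section Der.
Variable R : realType.

Lemma der_uniq (f : R -> R) (x a b : R) : is_derive x 1 f a -> is_derive x 1 f b -> a = b.
Proof. by move=> [_ <-] [_ <-]. Qed.

Lemma derD (f g : R -> R) (x a b : R) : is_derive x 1 f a -> is_derive x 1 g b ->
  is_derive x 1 (fun s => f s + g s) (a + b).
Proof. move=> H1 H2; exact: (is_deriveD H1 H2). Qed.

Lemma derN (f : R -> R) (x a : R) : is_derive x 1 f a ->
  is_derive x 1 (fun s => - f s) (- a).
Proof. move=> H1; exact: (is_deriveN H1). Qed.

Lemma derZ (f : R -> R) (k x a : R) : is_derive x 1 f a ->
  is_derive x 1 (fun s => k * f s) (k * a).
Proof. move=> H1; exact: (is_deriveZ k H1). Qed.

Lemma derM (f g : R -> R) (x a b : R) : is_derive x 1 f a -> is_derive x 1 g b ->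
  is_derive x 1 (fun s => f s * g s) (f x * b + g x * a).
Proof.
move=> H1 H2; have := (is_deriveM H1 H2).
by move=> [? E]; split => //; rewrite E /GRing.scale /= !mulrC.
Qed.

Lemma derC (x k : R) : is_derive x 1 (fun _ : R => k) 0.
Proof. exact: is_derive_cst. Qed.

Lemma derS n (f : 'I_n -> R -> R) (x : R) (a : 'I_n -> R) :
  (forall i, is_derive x 1 (f i) (a i)) ->
  is_derive x 1 (fun s => \sum_i f i s) (\sum_i a i).
Proof.
move=> H; have := @is_derive_sum _ _ _ n f x 1 a H.
by rewrite fct_sumE.
Qed.

End Der.



Section VDer.
Variable R : realType.

Definition vder n (F : R -> 'rV[R]_n) (t : R) (F' : 'rV[R]_n) :=
  forall i, is_derive t 1 (fun s => F s 0 i) (F' 0 i).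

Lemma vderD n (F G : R -> 'rV[R]_n) t a b : vder F t a -> vder G t b ->
  vder (fun s => F s + G s) t (a + b).
Proof.
move=> H1 H2 i; have := derD (H1 i) (H2 i).
have -> : (fun s => (F s + G s) 0 i) = (fun s => F s 0 i + G s 0 i).
  by apply/funext => s; rewrite mxE.
by rewrite mxE.
Qed.

Lemma vderZ n (F : R -> 'rV[R]_n) k t a : vder F t a ->
  vder (fun s => k *: F s) t (k *: a).
Proof.
move=> H1 i; have := derZ k (H1 i).
have -> : (fun s => (k *: F s) 0 i) = (fun s => k * F s 0 i).
  by apply/funext => s; rewrite mxE.
by rewrite mxE.
Qed.

Lemma vderN n (F : R -> 'rV[R]_n) t a : vder F t a ->
  vder (fun s => - F s) t (- a).
Proof.
move=> H1 i; have := derN (H1 i).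
have -> : (fun s => (- F s) 0 i) = (fun s => - F s 0 i).
  by apply/funext => s; rewrite mxE.
by rewrite mxE.
Qed.

Lemma vderB n (F G : R -> 'rV[R]_n) t a b : vder F t a -> vder G t b ->
  vder (fun s => F s - G s) t (a - b).
Proof. by move=> H1 H2; apply: vderD => //; apply: vderN. Qed.

Lemma vderC n (c : 'rV[R]_n) t : vder (fun _ => c) t 0.
Proof. by move=> i; rewrite mxE; apply: derC. Qed.

Lemma vder_mulmx n m (F : R -> 'rV[R]_n) (A : 'M[R]_(n, m)) t a : vder F t a ->
  vder (fun s => F s *m A) t (a *m A).
Proof.
move=> H j; rewrite mxE.
have -> : (fun s => (F s *m A) 0 j) = (fun s => \sum_i F s 0 i * A i j).
  by apply/funext => s; rewrite mxE.
apply: derS => i; under eq_fun do rewrite mulrC; rewrite mulrC.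
exact: derZ.
Qed.

Lemma dotv_der n (F G : R -> 'rV[R]_n) t a b : vder F t a -> vder G t b ->
  is_derive t 1 (fun s => dotv (F s) (G s)) (dotv a (G t) + dotv (F t) b).
Proof.
move=> H1 H2; rewrite /dotv -big_split /=; apply: derS => i.
have := derM (H1 i) (H2 i); move=> [? E]; split => //; rewrite E; ring.
Qed.

Lemma vder0_cst n (F : R -> 'rV[R]_n) : (forall t, vder F t 0) -> forall t, F t = F 0.
Proof.
move=> H t; apply/rowP => i.
apply: (@is_derive_0_is_cst _ (fun s => F s 0 i)) => x.
by have := H x i; rewrite mxE.
Qed.

Lemma vder_uniq n (F : R -> 'rV[R]_n) t a b : vder F t a -> vder F t b -> a = b.
Proof. by move=> H1 H2; apply/rowP => i; apply: der_uniq (H1 i) (H2 i). Qed.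

End VDer.




Section Norm.
Variable R : realType.
Local Open Scope classical_set_scope.

Lemma abs_nder (f : R -> R) (a : R) : (forall s, f s = `|s|) -> ~ is_derive (0:R) (1:R) f a.
Proof.
move=> fE [df Da].
have Er := cvg_at_rightE _ _ df.
have El := cvg_at_leftE _ _ df.
rewrite /derive in Da.
have R1 : lim ((fun h : R => h^-1 *: ((f \o shift 0) (h *: 1) - f 0)) @ at_right 0) = 1.
  apply: norm_lim_near_cst; near=> h.
  have hp : 0 < h by near: h; exact: nbhs_right_gt.
  rewrite /= !fE scaler1 addr0 normr0 subr0 gtr0_norm //.
  by rewrite -[_ *: _]/(h^-1 * h) mulVf // gt_eqF.
have L1 : lim ((fun h : R => h^-1 *: ((f \o shift 0) (h *: 1) - f 0)) @ at_left 0) = -1.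
  apply: norm_lim_near_cst; near=> h.
  have hp : h < 0 by near: h; exact: nbhs_left_lt.
  rewrite /= !fE scaler1 addr0 normr0 subr0 ltr0_norm //.
  by rewrite -[_ *: _]/(h^-1 * - h) mulrN mulVf // lt_eqF.
have A1 : a = 1 by rewrite -Da Er.
have A2 : a = -1 by rewrite -Da El.
rewrite A1 in A2; lra.
Unshelve. all: by end_near. Qed.

Lemma enorm_ge0 n (p : 'rV[R]_n) : 0 <= enorm p.
Proof. exact: sqrtr_ge0. Qed.

Lemma enorm_gt0 n (p : 'rV[R]_n) : p != 0 -> 0 < enorm p.
Proof.
move=> pn0; rewrite /enorm sqrtr_gt0 lt_def dotvv_ge0 andbT.
by apply/eqP => /dotvv_eq0 /eqP; rewrite (negbTE pn0).
Qed.

Lemma vder_lin n (p v : 'rV[R]_n) t : vder (fun s : R => p + s *: v) t v.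
Proof.
rewrite -[v in vder _ _ v]add0r; apply: vderD; first exact: vderC.
move=> i; have -> : (fun s : R => (s *: v) 0 i) = (fun s => s * v 0 i).
  by apply/funext => s; rewrite mxE.
have := derM (is_derive_id t 1) (derC t (v 0 i)).
by move=> [? E]; split => //; rewrite E /=; ring.
Qed.

Lemma enorm_der n (p v : 'rV[R]_n) : p != 0 ->
  is_derive (0:R) (1:R) (fun s : R => enorm (p + s *: v)) (dotv p v / enorm p).
Proof.
move=> pn0.
have Hq := dotv_der (vder_lin p v 0) (vder_lin p v 0).
rewrite scale0r addr0 in Hq.
have pos : 0 < dotv p p by have := enorm_gt0 pn0; rewrite /enorm sqrtr_gt0.
have Hs : is_derive (dotv (p + 0 *: v) (p + 0 *: v)) 1 Num.sqrt (2 * Num.sqrt (dotv p p))^-1.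
  by rewrite scale0r addr0; exact: is_derive1_sqrt.
have := is_derive1_comp Hs Hq.
move=> [? E]; split => //; rewrite E /enorm dotvC.
have : Num.sqrt (dotv p p) != 0 by rewrite gt_eqF // sqrtr_gt0.
move=> h; field; rewrite h //.
Qed.

Lemma enorm_scale_delta n (i : 'I_n) (s : R) : enorm (s *: delta_mx 0 i) = `|s|.
Proof.
rewrite /enorm dotvZl dotvZr dotv_delta mxE !eqxx mulr1.
by rewrite -expr2 sqrtr_sqr.
Qed.

End Norm.



Section Lin.
Variables (R : realType) (d1 d2 : nat) (B : 'I_d2 -> 'M[R]_d1).

Lemma JmatT mu : (Jmat B mu)^T = \sum_k mu 0 k *: B k.
Proof.
apply/matrixP => i j; rewrite /Jmat mxE !summxE.
by apply: eq_bigr => k _; rewrite !mxE.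
Qed.

Lemma JappE mu x : Japp B mu x = x *m (Jmat B mu)^T.
Proof. by rewrite /Japp trmx_mul trmxK. Qed.

Lemma JappDx mu a b : Japp B mu (a + b) = Japp B mu a + Japp B mu b.
Proof. by rewrite !JappE mulmxDl. Qed.

Lemma JappZx mu k a : Japp B mu (k *: a) = k *: Japp B mu a.
Proof. by rewrite !JappE scalemxAl. Qed.

Lemma JappNx mu a : Japp B mu (- a) = - Japp B mu a.
Proof. by rewrite -scaleN1r JappZx scaleN1r. Qed.

Lemma JappBx mu a b : Japp B mu (a - b) = Japp B mu a - Japp B mu b.
Proof. by rewrite JappDx JappNx. Qed.

Lemma Japp0x mu : Japp B mu 0 = 0.
Proof. by rewrite JappE mul0mx. Qed.

Lemma JappDm mu nu x : Japp B (mu + nu) x = Japp B mu x + Japp B nu x.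
Proof.
rewrite !JappE !JmatT -mulmxDr -big_split /=; congr (_ *m _).
by apply: eq_bigr => k _; rewrite mxE scalerDl.
Qed.

Lemma JappZm mu k x : Japp B (k *: mu) x = k *: Japp B mu x.
Proof.
rewrite !JappE !JmatT !mulmx_sumr scaler_sumr.
by apply: eq_bigr => j _; rewrite mxE -scalerA !scalemxAr.
Qed.

Lemma dot_bracket_J mu y z : dotv z (Japp B mu y) = dotv mu (bracket B y z).
Proof.
rewrite JappE JmatT mulmx_sumr.
have -> : forall n (s : seq 'I_n) (P : pred 'I_n) (F : 'I_n -> 'rV[R]_d1), dotv z (\sum_(k <- s | P k) F k) = \sum_(k <- s | P k) dotv z (F k).
  move=> n s P F; elim/big_rec2: _ => [|i a b _ <-]; first by rewrite dotv0r.
  by rewrite dotvDr.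
rewrite [RHS]/dotv; apply: eq_bigr => k _.
rewrite -scalemxAr dotvZr mxE; congr (_ * _).
by rewrite dotvC dotvE.
Qed.

Hypothesis skew : forall k, (B k)^T = - B k.

Lemma bracketC a b : bracket B a b = - bracket B b a.
Proof.
apply/rowP => k; rewrite mxE [in RHS]mxE [in RHS]mxE.
have h : (a *m B k *m b^T)^T = - (b *m B k *m a^T).
  by rewrite !trmx_mul trmxK skew mulNmx mulmxN mulmxA.
have -> : (a *m B k *m b^T) 0 0 = ((a *m B k *m b^T)^T) 0 0 by rewrite [RHS]mxE.
by rewrite h mxE.
Qed.

Lemma bracketvv a : bracket B a a = 0.
Proof.
have := bracketC a a => /eqP; rewrite -addr_eq0 -mulr2n -scaler_nat.
by rewrite scaler_eq0 pnatr_eq0 /= => /eqP.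
Qed.

Lemma dotJvv mu p : dotv p (Japp B mu p) = 0.
Proof. by rewrite dot_bracket_J bracketvv dotv0r. Qed.

Lemma dotJ_swap mu p q : dotv p (Japp B mu q) = - dotv q (Japp B mu p).
Proof. by rewrite !dot_bracket_J bracketC dotvNr. Qed.

End Lin.



Section Sol.
Variables (R : realType) (d1 d2 : nat) (B : 'I_d2 -> 'M[R]_d1).
Hypothesis skew : forall k, (B k)^T = - B k.

Lemma partial_val (f : R -> R) n (p v : 'rV[R]_n) a :
  is_derive (0:R) (1:R) f a -> (forall s, f s = enorm (p + s *: v)) -> p != 0 ->
  a = dotv p v / enorm p.
Proof.
move=> H fE pn0; have ff : f = (fun s => enorm (p + s *: v)) by apply/funext.
by rewrite ff in H; apply: der_uniq H (enorm_der _ pn0).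
Qed.

Variables (y p : 'rV[R]_d1 * 'rV[R]_d2) (X : R -> 'rV[R]_d1) (U : R -> 'rV[R]_d2)
  (Xi : R -> 'rV[R]_d1) (M : R -> 'rV[R]_d2).
Hypothesis hs : ham_sol B y p X U Xi M.
Let mu := p.2.
Let P s := Xi s + 2^-1 *: Japp B mu (X s).
Hypothesis P0nz : P 0 != 0.

Lemma M_cst s : M s = mu.
Proof.
case: hs => _ _ _ M0 H.
have -> : mu = M 0 by rewrite M0.
apply: vder0_cst => t k; have [_ _ _ H4] := H t.
have [a [Ha Hd]] := H4 k.
have a0 : a = 0.
  apply: der_uniq Ha _; exact: derC.
by rewrite a0 oppr0 in Hd; rewrite mxE.
Qed.

Lemma Pt_nz t : P t != 0.
Proof.
have [i0 _|none] := pickP (fun _ : 'I_d1 => true); last first.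
  by case/negP: P0nz; apply/eqP/rowP => i; have := none i.
apply/negP => /eqP Pt0.
case: hs => _ _ _ _ H; have [H1 _ _ _] := H t.
have [a [Ha _]] := H1 i0.
apply: (@abs_nder _ _ a _ Ha) => s.
rewrite /Ham M_cst -(enorm_scale_delta i0 s); congr enorm.
by rewrite -[RHS]add0r -Pt0 /P addrAC.
Qed.


Let c t := enorm (P t).

Lemma X_der t : vder X t ((c t)^-1 *: P t).
Proof.
case: hs => _ _ _ _ H; have [H1 _ _ _] := H t.
move=> i; have [a [Ha Hd]] := H1 i.
have -> : (((c t)^-1 *: P t) 0 i) = a.
  rewrite (partial_val Ha (p := P t) (v := delta_mx 0 i)); last exact: Pt_nz.
    by rewrite mxE dotv_delta mulrC.
  by move=> s; rewrite /Ham M_cst /P addrAC.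
exact: Hd.
Qed.

Lemma Xi_der t : vder Xi t (((c t)^-1 * 2^-1) *: Japp B mu (P t)).
Proof.
case: hs => _ _ _ _ H; have [_ _ H3 _] := H t.
move=> i; have [a [Ha Hd]] := H3 i.
have -> : ((((c t)^-1 * 2^-1) *: Japp B mu (P t)) 0 i) = - a.
  rewrite (partial_val Ha (p := P t) (v := 2^-1 *: Japp B mu (delta_mx 0 i))); last exact: Pt_nz.
    rewrite mxE dotvZr dotJ_swap // dotvC dotv_delta /c; ring.
  move=> s; rewrite /Ham M_cst /P JappDx JappZx scalerDr addrA; congr (enorm (_ + _)).
  by rewrite !scalerA mulrC.
exact: Hd.
Qed.

Lemma U_der (t : R) k : is_derive t (1:R) (fun s => U s 0 k)
   (dotv (P t) (2^-1 *: Japp B (delta_mx 0 k) (X t)) / c t).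
Proof.
case: hs => _ _ _ _ H; have [_ H2 _ _] := H t.
have [a [Ha Hd]] := H2 k.
rewrite -(partial_val Ha (p := P t)) //; last exact: Pt_nz.
move=> s; rewrite /Ham M_cst /P JappDm JappZm scalerDr addrA; congr (enorm (_ + _)).
by rewrite !scalerA mulrC.
Qed.

Lemma Japp_der nu (F : R -> 'rV[R]_d1) t a : vder F t a ->
  vder (fun s => Japp B nu (F s)) t (Japp B nu a).
Proof.
move=> h; have -> : (fun s => Japp B nu (F s)) = (fun s => F s *m (Jmat B nu)^T).
  by apply/funext => s; rewrite JappE.
by rewrite JappE; apply: vder_mulmx.
Qed.

Lemma P_der t : vder P t ((c t)^-1 *: Japp B mu (P t)).
Proof.
have := vderD (Xi_der t) (vderZ (2^-1) (Japp_der mu (X_der t))).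
rewrite JappZx scalerA -scalerDl.
have -> : (c t)^-1 * 2^-1 + 2^-1 * (c t)^-1 = (c t)^-1.
  by field; rewrite gt_eqF //; exact: enorm_gt0 (Pt_nz t).
exact.
Qed.

Lemma P_norm t : c t = c 0.
Proof.
have h : forall t : R, is_derive t (1:R) (fun s => dotv (P s) (P s)) 0.
  move=> u; have := dotv_der (P_der u) (P_der u).
  by rewrite dotvZl dotvZr dotvC dotJvv // !mulr0 addr0.
by rewrite /c /enorm (is_derive_0_is_cst t 0 h).
Qed.

End Sol.



Lemma key_k (R : realType) d1 d2 (B : 'I_d2 -> 'M[R]_d1) (P y : 'rV[R]_d1) k :
  dotv P (Japp B (delta_mx 0 k) y) = dotv (y *m B k) P.
Proof. by rewrite dot_bracket_J dotvC dotv_delta mxE dotvE. Qed.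

Lemma bracket_k (R : realType) d1 d2 (B : 'I_d2 -> 'M[R]_d1) a b k :
  bracket B a b 0 k = dotv (a *m B k) b.
Proof. by rewrite mxE dotvE. Qed.

Lemma bracketDr (R : realType) d1 d2 (B : 'I_d2 -> 'M[R]_d1) a b c :
  bracket B a (b + c) = bracket B a b + bracket B a c.
Proof. by apply/rowP => k; rewrite bracket_k [RHS]mxE !bracket_k dotvDr. Qed.

Lemma bracketNr (R : realType) d1 d2 (B : 'I_d2 -> 'M[R]_d1) a b :
  bracket B a (- b) = - bracket B a b.
Proof. by apply/rowP => k; rewrite bracket_k [RHS]mxE !bracket_k dotvNr. Qed.

Lemma bracketNl (R : realType) d1 d2 (B : 'I_d2 -> 'M[R]_d1) a b :
  bracket B (- a) b = - bracket B a b.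
Proof. by apply/rowP => k; rewrite bracket_k [RHS]mxE !bracket_k mulNmx dotvNl. Qed.

Theorem proposition9p5 (R : realType) (d1 d2 : nat) (B : 'I_d2 -> 'M[R]_d1)
  (hG : stratified2 B)
  (t : R) (x y : 'rV[R]_d1 * 'rV[R]_d2) (xi : 'rV[R]_d1 * 'rV[R]_d2)
  (hXi : inXi B y xi)
  (Xs : R -> 'rV[R]_d1) (Us : R -> 'rV[R]_d2) (Xis : R -> 'rV[R]_d1) (Ms : R -> 'rV[R]_d2)
  (hs : ham_sol B y xi Xs Us Xis Ms)
  (X0 : R -> 'rV[R]_d1) (U0 : R -> 'rV[R]_d2) (Xi0 : R -> 'rV[R]_d1) (M0 : R -> 'rV[R]_d2)
  (h0 : ham_sol B (0, 0) (lbar_inv B y.1 xi) X0 U0 Xi0 M0) :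
  phase B xi.2 x (Xs t) (Us t) (Xis t) (Ms t)
  = phase B (lbar_inv B y.1 xi).2 (ltrans_inv B y x) (X0 t) (U0 t) (Xi0 t) (M0 t).
Proof.
have skew : forall k, (B k)^T = - B k by case: hG => _ [].
case: hXi => eta [nu [etan0 [_ xiE]]].
subst xi.
have [Xs0 Us0 Xis0 Ms0 _] := hs.
have [X00 U00 Xi00 M00 _] := h0.
rewrite /= in Xs0 Us0 Xis0 Ms0 X00 U00 Xi00 M00.
pose PS s := Xis s + 2^-1 *: Japp B nu (Xs s).
pose P0 s := Xi0 s + 2^-1 *: Japp B nu (X0 s).
have PS0 : PS 0 = eta by rewrite /PS Xis0 Xs0 subrK.
have P00 : P0 0 = eta by rewrite /P0 Xi00 X00 Japp0x scaler0 addr0 subrK.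
have hS0 : PS 0 != 0 by rewrite PS0.
have h00 : P0 0 != 0 by rewrite P00.
have cS u : enorm (PS u) = enorm eta.
  by rewrite -PS0; exact: (P_norm skew hs hS0 u).
have c0 u : enorm (P0 u) = enorm eta.
  by rewrite -P00; exact: (P_norm skew h0 h00 u).
set c := enorm eta in cS c0.
have dS u : vder PS u (c^-1 *: Japp B nu (PS u)).
  by rewrite -(cS u); exact: (P_der skew hs hS0 u).
have d0 u : vder P0 u (c^-1 *: Japp B nu (P0 u)).
  by rewrite -(c0 u); exact: (P_der skew h0 h00 u).
have dQ u : vder (fun s => PS s - P0 s) u (c^-1 *: Japp B nu (PS u - P0 u)).
  by rewrite JappBx scalerBr; apply: vderB.
have Qeq u : PS u = P0 u.
  have hd : forall v : R, is_derive v (1:R) (fun s => dotv (PS s - P0 s) (PS s - P0 s)) 0.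
    move=> v; have := dotv_der (dQ v) (dQ v).
    by rewrite dotvZl dotvZr dotvC dotJvv // !mulr0 addr0.
  have := is_derive_0_is_cst u 0 hd.
  rewrite PS0 P00 subrr dotv0l => /dotvv_eq0 /eqP.
  by rewrite subr_eq0 => /eqP.
have XE u : Xs u = y.1 + X0 u.
  have hv : forall v, vder (fun s => Xs s - X0 s) v 0.
    move=> v.
    have a1 : vder Xs v ((enorm (PS v))^-1 *: PS v) := X_der hs hS0 v.
    have a2 : vder X0 v ((enorm (P0 v))^-1 *: P0 v) := X_der h0 h00 v.
    by have := vderB a1 a2; rewrite Qeq subrr.
  have := vder0_cst hv u; rewrite Xs0 X00 subr0 => /eqP.
  by rewrite subr_eq addrC => /eqP.
have XiE u : Xis u = Xi0 u - 2^-1 *: Japp B nu y.1.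
  have hv : forall v, vder (fun s => Xis s - Xi0 s) v 0.
    move=> v.
    have a1 : vder Xis v (((enorm (PS v))^-1 * 2^-1) *: Japp B nu (PS v)) :=
      Xi_der skew hs hS0 v.
    have a2 : vder Xi0 v (((enorm (P0 v))^-1 * 2^-1) *: Japp B nu (P0 v)) :=
      Xi_der skew h0 h00 v.
    by have := vderB a1 a2; rewrite Qeq subrr.
  have := vder0_cst hv u; rewrite Xis0 Xi00 => /eqP.
  rewrite subr_eq => /eqP ->; rewrite /lbar /=.
  set J := Japp B nu y.1; set h := 2^-1 *: J.
  by rewrite subrK [eta - h - eta]addrAC subrr add0r addrC.
have cn0 : c != 0 by rewrite gt_eqF //; exact: enorm_gt0.
have UE u : Us u = y.2 + U0 u + 2^-1 *: bracket B y.1 (X0 u).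
  have hk : forall k (v : R), is_derive v (1:R)
      (fun s => Us s 0 k - U0 s 0 k - 2^-1 * dotv (y.1 *m B k) (X0 s)) 0.
    move=> k v.
    have a1 : is_derive v (1:R) (fun s => Us s 0 k)
      (dotv (PS v) (2^-1 *: Japp B (delta_mx 0 k) (Xs v)) / enorm (PS v)) :=
      U_der hs hS0 v k.
    have a2 : is_derive v (1:R) (fun s => U0 s 0 k)
      (dotv (P0 v) (2^-1 *: Japp B (delta_mx 0 k) (X0 v)) / enorm (P0 v)) :=
      U_der h0 h00 v k.
    have a3' : vder X0 v ((enorm (P0 v))^-1 *: P0 v) := X_der h0 h00 v.
    have a3 := dotv_der (vderC (y.1 *m B k) v) a3'.
    have := derD (derD a1 (derN a2)) (derN (derZ (2^-1) a3)).
    move=> H; apply: is_derive_eq H _.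
    rewrite cS c0 -Qeq XE JappDx scalerDr dotvDr !dotvZr key_k dotv0l add0r.
    by field.
  apply/rowP => k.
  have := is_derive_0_is_cst u 0 (hk k).
  rewrite Us0 U00 X00 dotv0r mulr0 subr0 mxE subr0 => E.
  have E1 : forall (a b : 'rV[R]_d2), (a + b) 0 k = a 0 k + b 0 k by move=> *; rewrite mxE.
  have E2 : forall r (a : 'rV[R]_d2), (r *: a) 0 k = r * a 0 k by move=> *; rewrite mxE.
  rewrite E1 E1 E2 -E mxE dotvE; ring.
have MS u : Ms u = nu := M_cst hs u.
have M0E u : M0 u = nu := M_cst h0 u.
rewrite /phase /= MS M0E XE XiE UE /ltrans_inv /gmul /ginv /=.
have wE : x.1 - (y.1 + X0 t) = - y.1 + x.1 - X0 t.
  by rewrite opprD addrA [x.1 - y.1]addrC.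
rewrite wE; congr (_ +i* _)%C.
set w := - y.1 + x.1 - X0 t.
rewrite dotvBr dotvZr dot_bracket_J [dotv nu _]dotvC.
rewrite /w !bracketDr !bracketNr bracketvv // oppr0 add0r bracketNl.

rewrite !(dotvDl, dotvNl, dotvZl). ring.
Qed.
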